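(* Consider a two-player bilinear game with $f_1(x_1,x_2)=x_1^\top Ax_2$, $f_2(x_1,x_2)=x_1^\top B^\top x_2$, $A\in\mathbb{R}^{n_1\times n_2}$, $B\in\mathbb{R}^{n_2\times n_1}$, step sizes $\gamma_1,\gamma_2>0$, and let $W$ be either $W_s$ (simultaneous gradient play) or $W_a$ (alternating gradient play) as defined in the context. Write $a_{pq}$, $b_{pq}$ for the $(p,q)$ entries of $A$, $B$. (1) If $i\neq j$ and coordinate $x_{1,j}$ is disturbance decoupled from coordinate $x_{1,i}$, then $\sum_{\ell=1}^{n_2}b_{\ell i}a_{j\ell}=0$. (2) If $i\neq j$ and coordinate $x_{2,j}$ is disturbance decoupled from coordinate $x_{2,i}$, then $\sum_{\ell=1}^{n_1}b_{j\ell}a_{\ell i}=0$.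
   Context: Player 1 has action $x_1=(x_{1,1},\ldots,x_{1,n_1})\in\mathbb{R}^{n_1}$, player 2 has $x_2=(x_{2,1},\ldots,x_{2,n_2})\in\mathbb{R}^{n_2}$; the joint vector $x=(x_1,x_2)\in\mathbb{R}^{n_1+n_2}$. Simultaneous gradient play $x_1^{k+1}=x_1^k-\gamma_1Ax_2^k$, $x_2^{k+1}=x_2^k-\gamma_2Bx_1^k$ is the linear iteration $x^{k+1}=W_sx^k$ with $W_s=\begin{bmatrix}I&-\gamma_1A\\-\gamma_2B&I\end{bmatrix}$. Alternating gradient play $x_1^{k+1}=x_1^k-\gamma_1Ax_2^k$, $x_2^{k+1}=x_2^k-\gamma_2Bx_1^{k+1}$ is the linear iteration $x^{k+1}=W_ax^k$ with $W_a=\begin{bmatrix}I&-\gamma_1A\\-\gamma_2B&I+\gamma_1\gamma_2BA\end{bmatrix}$. Each coordinate is treated as a separate scalar player whose game-graph matrix is $W$. For coordinates $p\neq q$ of $\mathbb{R}^{n_1+n_2}$, with $\gamma_{(q)}$ the step size of the player owning coordinate $q$, coordinate $p$ is disturbance decoupled from coordinate $q$ if for every initial $x^0$ and every real sequence $(\delta^k)_{k\ge0}$, the iterations $x^{k+1}=Wx^k$ and $y^{k+1}=Wy^k-\gamma_{(q)}\delta^ke_q$ with $y^0=x^0$ satisfy $y^k_p=x^k_p$ for all $k\ge0$ ($e_q$ the $q$-th standard basis vector). *)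

(* Defs.v *)
From mathcomp Require Import all_boot all_order all_algebra.
Set Implicit Arguments. Unset Strict Implicit. Unset Printing Implicit Defensive.
Import Order.TTheory GRing.Theory Num.Theory.
Local Open Scope ring_scope.

Section Game.
Variables (R : realFieldType) (n1 n2 : nat).

(* Joint vector x = (x1, x2) is a column vector in 'cV_(n1 + n2);
   coordinate x_{1,i} is index [lshift n2 i], x_{2,j} is index [rshift n1 j]. *)

Definition Wsim (g1 g2 : R) (A : 'M[R]_(n1, n2)) (B : 'M[R]_(n2, n1))
  : 'M[R]_(n1 + n2) :=
  block_mx 1%:M (- (g1 *: A)) (- (g2 *: B)) 1%:M.

Definition Walt (g1 g2 : R) (A : 'M[R]_(n1, n2)) (B : 'M[R]_(n2, n1))
  : 'M[R]_(n1 + n2) :=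
  block_mx 1%:M (- (g1 *: A)) (- (g2 *: B)) (1%:M + (g1 * g2) *: (B *m A)).

Definition step_of (g1 g2 : R) (q : 'I_(n1 + n2)) : R :=
  if split q is inl _ then g1 else g2.

Fixpoint traj (W : 'M[R]_(n1 + n2)) (x0 : 'cV[R]_(n1 + n2)) (k : nat)
  : 'cV[R]_(n1 + n2) :=
  match k with
  | 0 => x0
  | k'.+1 => W *m traj W x0 k'
  end.

Fixpoint dtraj (W : 'M[R]_(n1 + n2)) (gq : R) (q : 'I_(n1 + n2))
  (delta : nat -> R) (x0 : 'cV[R]_(n1 + n2)) (k : nat) : 'cV[R]_(n1 + n2) :=
  match k with
  | 0 => x0
  | k'.+1 => W *m dtraj W gq q delta x0 k' - (gq * delta k') *: delta_mx q 0
  end.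

Definition dist_decoupled (g1 g2 : R) (W : 'M[R]_(n1 + n2))
  (p q : 'I_(n1 + n2)) : Prop :=
  p != q /\
  forall (x0 : 'cV[R]_(n1 + n2)) (delta : nat -> R) (k : nat),
    dtraj W (step_of g1 g2 q) q delta x0 k p 0 = traj W x0 k p 0.

End Game.

(* Main.v *)
Require Import Defs.
From mathcomp Require Import all_boot all_order all_algebra.
Import Order.TTheory GRing.Theory Num.Theory.
Local Open Scope ring_scope.

Lemma mx0E (R : realFieldType) m n (i : 'I_m) (j : 'I_n) :
  (0 : 'M[R]_(m, n)) i j = 0.
Proof. by rewrite mxE. Qed.

Lemma traj0 (R : realFieldType) (n1 n2 : nat) (W : 'M[R]_(n1 + n2)) k :
  traj W 0 k = 0.
Proof. by elim: k => //= k ->; rewrite mulmx0. Qed.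

Lemma dd_entries {R : realFieldType} {n1 n2 : nat} {g1 g2 : R}
  {W : 'M[R]_(n1 + n2)} {p q} :
  dist_decoupled g1 g2 W p q -> step_of g1 g2 q != 0 ->
  W p q = 0 /\ (W *m W) p q = 0.
Proof.
move=> [_ H] hq.
set d := fun k : nat => if k == 0%N then (1 : R) else 0.
have H2 := H 0 d 2%N; have H3 := H 0 d 3%N.
rewrite traj0 mxE in H2; rewrite traj0 mxE in H3.
move: H2 H3; rewrite /= /d /= !mulr0 !scale0r !subr0 mulmx0 sub0r mulr1.
rewrite oppr0 !mx0E. rewrite !addr0. rewrite !mulmxN -!scalemxAr. rewrite mulmxA -(colE q W) -(colE q (W *m W)) !mxE => h2 h3.
split; apply/eqP.
- by move/eqP: h2; rewrite oppr_eq0 mulf_eq0 (negbTE hq) /=.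
- by move/eqP: h3; rewrite oppr_eq0 mulf_eq0 (negbTE hq) /=.
Qed.

Theorem corollary3 (R : realFieldType) (n1 n2 : nat)
  (A : 'M[R]_(n1, n2)) (B : 'M[R]_(n2, n1)) (g1 g2 : R)
  (hg1 : 0 < g1) (hg2 : 0 < g2) (W : 'M[R]_(n1 + n2))
  (hW : W = Wsim g1 g2 A B \/ W = Walt g1 g2 A B) :
  (forall i j : 'I_n1, i != j ->
     dist_decoupled g1 g2 W (lshift n2 j) (lshift n2 i) ->
     \sum_(l < n2) B l i * A j l = 0) /\
  (forall i j : 'I_n2, i != j ->
     dist_decoupled g1 g2 W (rshift n1 j) (rshift n1 i) ->
     \sum_(l < n1) B j l * A l i = 0).
Proof.
have g12 : g1 * g2 != 0 by rewrite mulf_neq0 // gt_eqF.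
split=> i j hij hd; have hji : (j == i) = false by rewrite eq_sym (negbTE hij).
- have hq : step_of g1 g2 (lshift n2 i) != 0.
    by rewrite /step_of -[lshift n2 i]/(unsplit (inl i)) unsplitK gt_eqF.
  have [_ h] := dd_entries hd hq.
  have e : \sum_(l < n2) B l i * A j l = (A *m B) j i.
    by rewrite mxE; apply: eq_bigr => l _; rewrite mulrC.
  rewrite e; apply/eqP; apply: contraTT g12 => nz; rewrite negbK; apply/eqP.
  apply: (mulIf nz); rewrite mul0r.
  move: h; case: hW => ->; rewrite /Wsim /Walt mulmx_block block_mxEul
    mulNmx mulmxN opprK -scalemxAl -scalemxAr scalerA mul1mx !mxE hji mulr0n add0r => ->; by [].
- have hq : step_of g1 g2 (rshift n1 i) != 0.
    by rewrite /step_of -[rshift n1 i]/(unsplit (inr i)) unsplitK gt_eqF.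
  have [h1 h] := dd_entries hd hq.
  have e : \sum_(l < n1) B j l * A l i = (B *m A) j i by rewrite mxE.
  rewrite e; apply/eqP; apply: contraTT g12 => nz; rewrite negbK; apply/eqP.
  apply: (mulIf nz); rewrite mul0r.
  case: hW => hW; subst W.
  + move: h; rewrite /Wsim mulmx_block block_mxEdr
      mulNmx mulmxN opprK -scalemxAl -scalemxAr scalerA mul1mx !mxE hji
      mulr0n addr0 [g2 * g1]mulrC => ->; by [].
  + move: h1; rewrite /Walt block_mxEdr !mxE hji mulr0n add0r => ->; by [].
Qed.
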